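(* Let $\alpha,\gamma$ be weak compositions. The following are equivalent: (1) $\mathsf{rajcode}(\alpha)=\mathsf{rajcode}(\gamma)$; (2) $\mathsf{dark}(\alpha)=\mathsf{dark}(\gamma)$; (3) the underlying diagrams (ignoring labels) of $\mathsf{snow}(D(\alpha))$ and $\mathsf{snow}(D(\gamma))$ are equal.
   Context: A weak composition is an infinite sequence of nonnegative integers with finitely many positive entries; $D(\alpha)=\{(r,c):1\le c\le\alpha_r\}$ where $(r,c)$ is the cell in row $r$ (row 1 on top), column $c$. For a diagram $D$ (finite subset of $\mathbb{Z}_{>0}^2$), $\mathsf{snow}(D)$ is built by iterating through rows from bottom to top: in row $r$, take the rightmost cell $(r,c)\in D$ such that column $c$ contains no dark cloud yet; if it exists label it a dark cloud and add snowflake cells at $(r',c)$ for all $r'<r$ with $(r',c)\notin D$. $\mathsf{dark}(D)$ is the set of dark-cloud cells, $\mathsf{rajcode}(D)$ is the weak composition whose $i$-th entry is the number of cells of $\mathsf{snow}(D)$ in row $i$; $\mathsf{rajcode}(\alpha)=\mathsf{rajcode}(D(\alpha))$, $\mathsf{dark}(\alpha)=\mathsf{dark}(D(\alpha))$. *)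

(* Defs.v *)
From mathcomp Require Import all_boot.
Set Implicit Arguments. Unset Strict Implicit. Unset Printing Implicit Defensive.

(* A diagram is a finite set of cells (r, c), represented as a list (read as a
   set via membership); row 1 is the top row.  A weak composition is a finite
   list of nat: entry r (1-indexed) is [nth 0 alpha r.-1]; all further entries
   are 0 (trailing zeros are immaterial). *)
Definition cell := (nat * nat)%type.
Definition diagram := seq cell.

Definition Dcomp (alpha : seq nat) : diagram :=
  flatten [seq [seq (r, c) | c <- iota 1 (nth 0 alpha r.-1)] | r <- iota 1 (size alpha)].

Definition maxrow (D : diagram) : nat := \max_(p <- D) p.1.

Definition dark_step (D : diagram) (dk : seq cell) (r : nat) : seq cell :=
  let cands := [seq p.2 | p <- D & (p.1 == r) && (p.2 \notin [seq q.2 | q <- dk])] in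
  if cands is [::] then dk else (r, \max_(c <- cands) c) :: dk.

Definition dark (D : diagram) : seq cell :=
  foldl (dark_step D) [::] (rev (iota 1 (maxrow D))).

Definition snowflakes (D : diagram) : seq cell :=
  flatten [seq [seq (r', p.2) | r' <- iota 1 p.1.-1 & (r', p.2) \notin D] | p <- dark D].

(* underlying diagram (labels ignored) of snow(D) *)
Definition snow (D : diagram) : seq cell := D ++ snowflakes D.

Definition rajcode (D : diagram) (i : nat) : nat :=
  count (fun p : cell => p.1 == i) (undup (snow D)).

(* Main.v *)
Require Import Defs.
From mathcomp Require Import all_boot zify.
Set Implicit Arguments. Unset Strict Implicit. Unset Printing Implicit Defensive.

Definition isdark (U : pred nat) (A c : nat) :=
  [&& 0 < c, c <= A, ~~ U c & all U (iota c.+1 (A - c))].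

Definition Ur (dk : seq cell) (r : nat) : pred nat :=
  fun c => has (fun q : cell => (r < q.1) && (q.2 == c)) dk.

Lemma mem_Dcomp alpha r c :
  ((r, c) \in Dcomp alpha) = [&& 0 < r, 0 < c & c <= nth 0 alpha r.-1].
Proof.
apply/idP/idP.
- case/flatten_mapP => r' Hr' /mapP [c' Hc' [-> ->]].
  rewrite mem_iota in Hr'; rewrite mem_iota in Hc'.
  apply/and3P; split; lia.
- case/and3P => r0 c0 cle; apply/flatten_mapP; exists r.
    rewrite mem_iota; apply/andP; split => //.
    case: (leqP (size alpha) r.-1) => H; last lia.
    by rewrite (nth_default 0 H) in cle; lia.
  apply/mapP; exists c => //; rewrite mem_iota; lia.
Qed.

Lemma dark_uniq U A c1 c2 : isdark U A c1 -> isdark U A c2 -> c1 = c2.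
Proof.
wlog: c1 c2 / c1 <= c2.
  move=> W H1 H2; case: (leqP c1 c2) => H; first exact: W.
  by apply/esym; apply: W => //; apply: ltnW.
move=> le12 /and4P [p1 l1 n1 a1] /and4P [p2 l2 n2 a2].
case: (ltngtP c1 c2) => // H; last by lia.
have : c2 \in iota c1.+1 (A - c1) by rewrite mem_iota; lia.
by move/(allP a1); rewrite (negbTE n2).
Qed.

Lemma ex_dark U A c : 0 < c <= A -> ~~ U c -> exists2 c', c <= c' & isdark U A c'.
Proof.
move: {2}(A - c) (leqnn (A - c)) => k; elim: k c => [|k IH] c Hk Hc Hu.
  exists c => //; apply/and4P; split => //; try lia.
  by have -> : A - c = 0 by lia.
case Ha: (all U (iota c.+1 (A - c))).
  by exists c => //; apply/and4P; split; try lia.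
move/negbT: Ha => /allPn [x]; rewrite mem_iota => Hx Ux.
have [||c' Hc' D] := IH x _ _ Ux; try lia.
by exists c' => //; lia.
Qed.

Lemma count_lt (T : eqType) (g h : pred T) s x :
  (forall y, g y -> h y) -> x \in s -> h x -> ~~ g x -> count g s < count h s.
Proof.
move=> Hgh; elim: s => //= y s IH; rewrite in_cons => /orP [/eqP <- | xs] hx gx.
  rewrite hx (negbTE gx) /= add0n add1n ltnS; exact: sub_count.
have := IH xs hx gx; case gy: (g y); last by case: (h y) => /=; lia.
by rewrite (Hgh _ gy) /=; lia.
Qed.

Section CountDet.
Variables (U : pred nat) (N : nat) (d1 d2 f1 f2 : pred nat).
Hypothesis F1 : forall c, f1 c <-> (U c \/ exists c', d1 c' /\ 0 < c <= c').
Hypothesis F2 : forall c, f2 c <-> (U c \/ exists c', d2 c' /\ 0 < c <= c').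

Lemma count_lt_aux x : (forall c', d1 c' -> c' < x) -> d2 x -> 0 < x < N -> ~~ U x ->
  count f1 (iota 0 N) < count f2 (iota 0 N).
Proof.
move=> Hlt dx Hx Ux; apply: (@count_lt _ f1 f2 _ x).
- move=> y /F1 [Uy | [c' [dc' hc']]]; apply/F2; first by left.
  by right; exists x; split => //; have := Hlt _ dc'; lia.
- by rewrite mem_iota; lia.
- by apply/F2; right; exists x; split => //; lia.
- apply/negP => /F1 [Ux' | [c' [dc' hc']]]; first by rewrite Ux' in Ux.
  by have := Hlt _ dc'; lia.
Qed.
End CountDet.

Lemma count_det (U : pred nat) N (d1 d2 f1 f2 : pred nat) :
  (forall c, f1 c <-> (U c \/ exists c', d1 c' /\ 0 < c <= c')) ->
  (forall c, f2 c <-> (U c \/ exists c', d2 c' /\ 0 < c <= c')) ->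
  (forall c, d1 c -> 0 < c < N /\ ~~ U c) ->
  (forall c, d2 c -> 0 < c < N /\ ~~ U c) ->
  (forall c c', d1 c -> d1 c' -> c = c') ->
  (forall c c', d2 c -> d2 c' -> c = c') ->
  count f1 (iota 0 N) = count f2 (iota 0 N) -> forall c, d1 c -> d2 c.
Proof.
move=> F1 F2 B1 B2 Q1 Q2 E c1 dc1.
case: (boolP (has d2 (iota 0 N))).
  case/hasP => c2 _ dc2.
  case: (ltngtP c1 c2) => H; last by rewrite H.
    have [Hc2 Uc2] := B2 _ dc2.
    suff: count f1 (iota 0 N) < count f2 (iota 0 N) by rewrite E ltnn.
    apply: (@count_lt_aux U N d1 d2 f1 f2 F1 F2 c2) => //.
    by move=> c' dc'; rewrite (Q1 _ _ dc' dc1).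
  have [Hc1 Uc1] := B1 _ dc1.
  suff: count f2 (iota 0 N) < count f1 (iota 0 N) by rewrite E ltnn.
  apply: (@count_lt_aux U N d2 d1 f2 f1 F2 F1 c1) => //.
  by move=> c' dc'; rewrite (Q2 _ _ dc' dc2).
move=> nh; have [Hc1 Uc1] := B1 _ dc1.
suff: count f2 (iota 0 N) < count f1 (iota 0 N) by rewrite E ltnn.
apply: (@count_lt_aux U N d2 d1 f2 f1 F2 F1 c1) => //.
move=> c' dc'; have [Hc' _] := B2 _ dc'.
by move/hasPn: nh => /(_ c'); rewrite mem_iota dc'; move/(_ ltac:(lia)).
Qed.

Lemma max_in (s : seq nat) : s != [::] -> \max_(c <- s) c \in s.
Proof.
elim: s => // x s IH _; rewrite big_cons in_cons.
case: (eqVneq s [::]) => [-> | sn]; first by rewrite big_nil maxn0 eqxx.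
case: (leqP x (\max_(c <- s) c)) => H.
  by rewrite IH ?orbT.
by rewrite eqxx.
Qed.

Lemma in_maxrow (D : diagram) q : q \in D -> q.1 <= maxrow D.
Proof. by move=> H; rewrite /maxrow; apply: (@leq_bigmax_seq _ D predT (fun p : cell => p.1)). Qed.

Lemma step_sub D dk r q : q \in dk -> q \in dark_step D dk r.
Proof. by rewrite /dark_step; case: [seq _ | _ <- _ & _] => // x l H; rewrite in_cons H orbT. Qed.

Lemma step_inv D dk r q : q \in dark_step D dk r -> (q \in dk) \/ q.1 = r.
Proof.
rewrite /dark_step; case: [seq _ | _ <- _ & _] => [|x l]; first by left.
by rewrite in_cons => /orP [/eqP -> | H]; [right | left].
Qed.

Lemma isdark_eq (U U' : pred nat) A c : U =1 U' -> isdark U A c = isdark U' A c.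
Proof. by move=> H; rewrite /isdark (eq_all H) H. Qed.

Lemma step_mem alpha dk r q : 0 < r ->
  (q \in dark_step (Dcomp alpha) dk r) =
  (q \in dk) || ((q.1 == r) && isdark (fun c => c \in [seq p.2 | p <- dk]) (nth 0 alpha r.-1) q.2).
Proof.
move=> r0; rewrite /dark_step.
set cols := [seq p.2 | p <- dk].
set cands := [seq _ | _ <- _ & _].
have Hc : forall c, (c \in cands) = [&& 0 < c, c <= nth 0 alpha r.-1 & c \notin cols].
  move=> c; apply/mapP/idP.
    case=> [[r' c']]; rewrite mem_filter /= => /andP [/andP [/eqP e pn] pD] ->.
    by subst r'; rewrite mem_Dcomp in pD; case/and3P: pD => _ -> -> /=.
  case/and3P => c0 cle cn; exists (r, c) => //.
  by rewrite mem_filter /= eqxx cn mem_Dcomp r0 c0 cle.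
case E: cands => [|x l].
  case: q => r' c' /=; case D: (isdark _ _ _); last by rewrite !andbF orbF.
  case/and4P: D => c0 cle cn _.
  by have := Hc c'; rewrite E in_nil c0 cle cn.
set m := \max_(c <- x :: l) c.
have mIn : m \in cands by rewrite E; apply: max_in.
have mMax : forall y, y \in cands -> y <= m.
  move=> y; rewrite E => Hy; exact: (@leq_bigmax_seq _ (x :: l) predT id).
case: q => r' c'; rewrite in_cons xpair_eqE /= orbC; congr (_ || _).
case: (r' == r) => //=.
move: (mIn); rewrite Hc => /and3P [m0 mle mn].
apply/eqP/idP.
  move=> ->; apply/and4P; split => //.
  apply/allP => y; rewrite mem_iota => Hy; apply/negPn/negP => ny.
  have : y \in cands by rewrite Hc ny; apply/andP; split; lia.
  by move/mMax; lia.
case/and4P => c0 cle cn call.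
have : c' <= m by apply: mMax; rewrite Hc c0 cle cn.
rewrite leq_eqVlt => /orP [/eqP // | lt].
have : m \in iota c'.+1 (nth 0 alpha r.-1 - c') by rewrite mem_iota; lia.
by move/(allP call) => /= H; rewrite H in mn.
Qed.

Definition V (D : diagram) j := foldl (dark_step D) [::] (rev (iota j.+1 (maxrow D - j))).

Lemma V_rec D j : j < maxrow D -> V D j = dark_step D (V D j.+1) j.+1.
Proof.
move=> H; rewrite /V; have -> : maxrow D - j = (maxrow D - j.+1).+1 by lia.
by rewrite /= rev_cons foldl_rcons.
Qed.

Lemma V_ge D j : maxrow D <= j -> V D j = [::].
Proof. by move=> H; rewrite /V; have -> : maxrow D - j = 0 by lia. Qed.

Lemma V_rows D j q : q \in V D j -> j < q.1 <= maxrow D.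
Proof.
move: {2}(maxrow D - j) (leqnn (maxrow D - j)) => k.
elim: k j => [|k IH] j Hk.
  by rewrite V_ge //; lia.
case: (leqP (maxrow D) j) => Hj; first by rewrite V_ge.
rewrite V_rec // => /step_inv [H | ->]; last by lia.
have := IH j.+1 ltac:(lia) H; lia.
Qed.

Lemma V0 D : V D 0 = dark D.
Proof. by rewrite /V subn0. Qed.

Lemma V_restrict D j q : (q \in V D j) = (q \in dark D) && (j < q.1).
Proof.
case: q => r0 c0; rewrite -V0 /=; elim: j => [|j IH].
  by case H: ((r0, c0) \in V D 0) => //=; have := V_rows H => /andP [-> _].
case: (leqP (maxrow D) j) => Hj.
  rewrite V_ge; last by lia.
  case H: ((r0, c0) \in V D 0) => //=; symmetry; apply/negbTE; rewrite -leqNgt.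
  by have := V_rows H => /andP [_ h]; exact: leq_trans h (leq_trans Hj (leqnSn j)).
apply/idP/idP.
  move=> H; have := V_rows H => Hr.
  have : (r0, c0) \in V D j by rewrite V_rec // step_sub.
  by rewrite IH => /andP [-> _] /=; move: Hr => /= ; lia.
case/andP => H1 H2.
have : (r0, c0) \in V D j by rewrite IH H1 /=; lia.
rewrite V_rec // => /step_inv [] //= ; lia.
Qed.

Lemma K alpha r c :
  ((r, c) \in dark (Dcomp alpha)) =
  (0 < r) && isdark (Ur (dark (Dcomp alpha)) r) (nth 0 alpha r.-1) c.
Proof.
set D := Dcomp alpha.
case: r => [|r].
  by apply/negbTE/negP; rewrite -V0 => /V_rows.
case: (leqP r.+1 (maxrow D)) => Hr.
  have := V_restrict D r (r.+1, c); rewrite ltnSn andbT => <-.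
  rewrite V_rec // step_mem //= eqxx /=.
  have -> : ((r.+1, c) \in V D r.+1) = false.
    by apply/negbTE/negP => /V_rows /=; lia.
  apply: isdark_eq => c' /=; apply/mapP/hasP.
    case=> q qV ->; exists q; last by rewrite eqxx andbT; case/andP: (V_rows qV).
    by rewrite V_restrict in qV; case/andP: qV.
  case=> q qV /andP [h /eqP e]; exists q => //.
  by rewrite V_restrict qV.
have -> : ((r.+1, c) \in dark D) = false.
  by apply/negbTE/negP; rewrite -V0 => /V_rows /=; lia.
apply/esym/negbTE/negP => /andP [_ /and4P [c0 cle _ _]].
have : (r.+1, c) \in D by rewrite mem_Dcomp c0 cle.
by move/in_maxrow => /=; lia.
Qed.

Lemma snow_mem D r c :
  ((r, c) \in snow D) = ((r, c) \in D) || ((0 < r) && Ur (dark D) r c).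
Proof.
rewrite mem_cat; case Din: ((r, c) \in D) => //=.
apply/flatten_mapP/andP.
- case=> [[pr pc]] pIn /mapP [r']; rewrite mem_filter => /andP [nD ri] [-> ->].
  rewrite mem_iota /= in ri; split; first lia.
  by apply/hasP; exists (pr, pc) => //=; rewrite eqxx andbT; lia.
- case=> r0 /hasP [[pr pc] pIn /andP [lt /eqP e]]; exists (pr, pc) => //.
  apply/mapP; exists r; last by simpl in e; rewrite e.
  by simpl in e, lt; rewrite mem_filter /= e Din /= mem_iota; lia.
Qed.

Lemma dark_sub alpha q : q \in dark (Dcomp alpha) -> q \in Dcomp alpha.
Proof.
case: q => r c; rewrite K => /andP [r0 /and4P [c0 cle _ _]].
by rewrite mem_Dcomp r0 c0 cle.
Qed.

Lemma dark_row_le D q : q \in dark D -> q.1 <= maxrow D.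
Proof. by rewrite -V0 => /V_rows /andP []. Qed.

Lemma snow_form alpha r c :
  ((r, c) \in snow (Dcomp alpha)) =
  (0 < r) && (Ur (dark (Dcomp alpha)) r c ||
              has (fun q : cell => (q.1 == r) && (0 < c <= q.2)) (dark (Dcomp alpha))).
Proof.
rewrite snow_mem mem_Dcomp; case r0: (0 < r) => //=.
apply/idP/idP.
- case/orP => [/andP [c0 cle] | ->] //.
  case Uc: (Ur _ r c) => //=.
  have H1 : 0 < c <= nth 0 alpha r.-1 by rewrite c0.
  have H2 : ~~ Ur (dark (Dcomp alpha)) r c by rewrite Uc.
  have [c' cc' dk] := ex_dark H1 H2.
  apply/hasP; exists (r, c'); first by rewrite K r0.
  by rewrite /= eqxx c0.
- case/orP => [-> | /hasP [[r' c'] qIn /andP [/eqP e hc]]]; first by rewrite orbT.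
  simpl in e; subst r'; rewrite K in qIn; case/andP: qIn => _ /and4P [_ le _ _].
  by apply/orP; left; simpl in hc; apply/andP; split; lia.
Qed.

Lemma F_gen alpha r c : 0 < r ->
  ((r, c) \in snow (Dcomp alpha)) <->
  (Ur (dark (Dcomp alpha)) r c \/ exists c', (r, c') \in dark (Dcomp alpha) /\ 0 < c <= c').
Proof.
move=> r0; rewrite snow_form r0 /=; split.
  case/orP => [Uc | /hasP [[r' c'] qIn /andP [/eqP e hc]]]; first by left.
  by right; exists c'; simpl in e; subst r'.
case=> [-> // | [c' [dc hc]]]; apply/orP; right; apply/hasP; exists (r, c') => //.
by rewrite /= eqxx.
Qed.

Lemma raj_count D i N : (forall q, q \in snow D -> q.2 < N) ->
  rajcode D i = count (fun c => (i, c) \in snow D) (iota 0 N).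
Proof.
move=> HN; rewrite /rajcode -!size_filter; rewrite -[RHS](size_map (pair i)).
apply: perm_size; apply: uniq_perm.
- exact: filter_uniq (undup_uniq _).
- rewrite map_inj_uniq; first exact: filter_uniq (iota_uniq _ _).
  by move=> x y [].
case=> r c; rewrite mem_filter mem_undup /=; apply/andP/mapP.
  case=> /eqP -> H; exists c => //; rewrite mem_filter H mem_iota /=.
  by have := HN _ H.
by case=> c'; rewrite mem_filter => /andP [H _] [-> ->]; rewrite eqxx.
Qed.

Lemma snow_bound alpha N : (forall q, q \in Dcomp alpha -> q.2 < N) ->
  forall q, q \in snow (Dcomp alpha) -> q.2 < N.
Proof.
move=> HN [r c]; rewrite snow_mem => /orP [/HN // | /andP [_ /hasP [[pr pc] pIn /andP [_ /eqP e]]]].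
by rewrite /= -e; apply: (HN (pr, pc)); apply: dark_sub.
Qed.

Lemma B_gen alpha r c N : (forall q, q \in Dcomp alpha -> q.2 < N) ->
  (r, c) \in dark (Dcomp alpha) -> 0 < c < N /\ ~~ Ur (dark (Dcomp alpha)) r c.
Proof.
move=> Na H; have := Na _ (dark_sub H) => /= cN.
by move: H; rewrite K => /andP [_ /and4P [c0 _ nU _]]; rewrite c0 cN.
Qed.

Lemma Q_gen alpha r c c' :
  (r, c) \in dark (Dcomp alpha) -> (r, c') \in dark (Dcomp alpha) -> c = c'.
Proof. by rewrite !K => /andP [_ H1] /andP [_ H2]; exact: dark_uniq H1 H2. Qed.

Lemma row_dir alpha gamma r N :
  0 < r ->
  (forall q, q \in Dcomp alpha -> q.2 < N) -> (forall q, q \in Dcomp gamma -> q.2 < N) ->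
  (forall r' c, r < r' -> ((r', c) \in dark (Dcomp alpha)) = ((r', c) \in dark (Dcomp gamma))) ->
  rajcode (Dcomp alpha) r = rajcode (Dcomp gamma) r ->
  forall c, (r, c) \in dark (Dcomp alpha) -> (r, c) \in dark (Dcomp gamma).
Proof.
move=> r0 Na Ng Hr R.
have EU : Ur (dark (Dcomp gamma)) r =1 Ur (dark (Dcomp alpha)) r.
  move=> c; apply/hasP/hasP => -[[r' c'] qIn /andP [lt e]]; exists (r', c'); rewrite ?lt ?e //.
    by rewrite Hr.
  by rewrite -Hr.
apply: (count_det (U := Ur (dark (Dcomp alpha)) r) (N := N)
   (d1 := fun c => (r, c) \in dark (Dcomp alpha)) (d2 := fun c => (r, c) \in dark (Dcomp gamma))
   (f1 := fun c => (r, c) \in snow (Dcomp alpha)) (f2 := fun c => (r, c) \in snow (Dcomp gamma))).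
- by move=> c; exact: F_gen.
- by move=> c; have := F_gen gamma c r0; rewrite EU.
- by move=> c; exact: B_gen.
- by move=> c H; have := B_gen Ng H; rewrite EU.
- by move=> c c'; exact: Q_gen.
- by move=> c c'; exact: Q_gen.
- by rewrite -(raj_count _ (snow_bound Na)) -(raj_count _ (snow_bound Ng)).
Qed.

Theorem proposition4p16 (alpha gamma : seq nat) :
  [<-> (forall i, rajcode (Dcomp alpha) i = rajcode (Dcomp gamma) i);
       dark (Dcomp alpha) =i dark (Dcomp gamma);
       snow (Dcomp alpha) =i snow (Dcomp gamma)].
Proof.
tfae => [R | H | H].
- set N := (\max_(q <- Dcomp alpha ++ Dcomp gamma) q.2).+1.
  have Na : forall q, q \in Dcomp alpha -> q.2 < N.
    move=> q qIn; rewrite ltnS; apply: (@leq_bigmax_seq _ _ predT (fun p : cell => p.2)) => //.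
    by rewrite mem_cat qIn.
  have Ng : forall q, q \in Dcomp gamma -> q.2 < N.
    move=> q qIn; rewrite ltnS; apply: (@leq_bigmax_seq _ _ predT (fun p : cell => p.2)) => //.
    by rewrite mem_cat qIn orbT.
  set B := maxn (maxrow (Dcomp alpha)) (maxrow (Dcomp gamma)).
  have agree : forall r, (forall r' c, r < r' ->
      ((r', c) \in dark (Dcomp alpha)) = ((r', c) \in dark (Dcomp gamma))) ->
      forall c, ((r, c) \in dark (Dcomp alpha)) = ((r, c) \in dark (Dcomp gamma)).
    move=> r Hr c; case r0: (0 < r); last by rewrite !K r0.
    apply/idP/idP; first exact: (@row_dir alpha gamma r N).
    apply: (@row_dir gamma alpha r N) => //.
      by move=> r' c' lt; rewrite Hr.
  have all_r : forall n r, B < n + r ->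
      forall c, ((r, c) \in dark (Dcomp alpha)) = ((r, c) \in dark (Dcomp gamma)).
    elim=> [|n IH] r Hn.
      move=> c; have Ha : ((r, c) \in dark (Dcomp alpha)) = false.
        by apply/negbTE/negP => /dark_row_le /=; lia.
      have Hg : ((r, c) \in dark (Dcomp gamma)) = false.
        by apply/negbTE/negP => /dark_row_le /=; lia.
      by rewrite Ha Hg.
    apply: agree => r' c lt; apply: IH; lia.
  by case=> r c; apply: (all_r B.+1); lia.
- by case=> r c; rewrite !snow_form /Ur !(eq_has_r H).
- have P : perm_eq (undup (snow (Dcomp alpha))) (undup (snow (Dcomp gamma))).
    by apply: uniq_perm; rewrite ?undup_uniq // => x; rewrite !mem_undup H.
  by move=> i; rewrite /rajcode (permP P).
Qed.
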